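(* Let $h\in\mathbb{R}[T]$. Then $K_h\in\Lambda'$, $\det K_h=1$, and $K_h\cdot{}^{\gamma}\!\left(K_h\right)^{-1}=M_h$. Consequently, on the open $\mathbb{C}^*$-stable subset $U=Y\setminus V(ab)$ (which is preserved by every $\mu_h$), one has $\mu_h|_U=\psi'_h\circ\mu_0|_U\circ(\psi'_h)^{-1}$; in particular all the restrictions $\mu_h|_U$, $h\in\mathbb{R}[T]$, are equivalent real circle forms on $U$ (equivalence via $\mathbb{C}^*$-equivariant automorphisms of $U$).
   Context: For $k\ge1$, $W_k=\mathbb{C}^2$ is the $\mathbb{C}^*$-module with weights $(k,-k)$. Fix $m\ge1$, $n=2m+1$, and $Y=W_2\times W_n$ with coordinates $(a,b,x,y)$, $t\cdot(a,b,x,y)=(t^2a,t^{-2}b,t^nx,t^{-n}y)$; $\sigma(t)=\overline{t}^{-1}$; a real circle form is an antiholomorphic involution $\mu$ with $\mu(t\cdot p)=\sigma(t)\cdot\mu(p)$. Let $\mu_0(a,b,x,y)=(\overline{b},\overline{a},\overline{y},\overline{x})$, $T=ab$. Let $\Lambda'$ be the group of matrices $M=\begin{pmatrix}P(T)& a^nQ(T)\\ b^nS(T)& R(T)\end{pmatrix}$ with $P,Q,R,S\in\mathbb{C}[T,T^{-1}]$ and $\det M=cT^k$, $c\in\mathbb{C}^*$, $k\in\mathbb{Z}$; for such $M$ define ${}^{\gamma}M=\begin{pmatrix}\overline{R}(T)& a^n\overline{S}(T)\\ b^n\overline{Q}(T)& \overline{P}(T)\end{pmatrix}$, where the bar conjugates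 coefficients. For $h\in\mathbb{R}[T]$ (with $h=h(ab)$): $M_h=\begin{pmatrix}1-Th^2 & a^nh^n\\ -b^nh^n & \sum_{j=0}^{n-1}(Th^2)^j\end{pmatrix}$, $\varphi_h(a,b,x,y)=(a,b,M_h\binom{x}{y})$, $\mu_h=\varphi_h\circ\mu_0$, and $$K_h=\begin{pmatrix}1 & a^n\dfrac{h}{T^m}\\[2mm] b^n\dfrac{h\sum_{j=0}^{m-1}(Th^2)^j}{T^m} & \sum_{j=0}^{m}(Th^2)^j\end{pmatrix},$$ with $\psi'_h$ the automorphism of $U$ given by $\psi'_h(a,b,x,y)=(a,b,K_h\binom{x}{y})$. *)

(* Defs.v *)
(* The complex numbers C are modelled by an arbitrary
   numClosedFieldType (algebraically closed field with conjugation). *)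
From HB Require Import structures.
From mathcomp Require Import all_boot all_order all_algebra.
Set Implicit Arguments. Unset Strict Implicit. Unset Printing Implicit Defensive.
Import Order.TTheory GRing.Theory Num.Theory.
Local Open Scope ring_scope.

Section Defs.
Variable C : numClosedFieldType.

Definition cj (x : C) : C := Num.conj x.

(* A Laurent polynomial in T, represented as p(T) / T^k *)
Definition laurent := ({poly C} * nat)%type.
Definition leval (L : laurent) (t : C) : C := L.1.[t] / t ^+ L.2.
Definition lconj (L : laurent) : laurent := (map_poly cj L.1, L.2).

Definition mx2 (p q r s : C) : 'M[C]_2 :=
  \matrix_(i < 2, j < 2)
    if i == 0 :> nat then (if j == 0 :> nat then p else q)
    else (if j == 0 :> nat then r else s).
Definition vec2 (x y : C) : 'cV[C]_2 :=
  \matrix_(i < 2, j < 1) if i == 0 :> nat then x else y.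

(* Data (P, Q, S, R) of a matrix [[P(T), a^n Q(T)], [b^n S(T), R(T)]], T = ab *)
Record ldata := LData { lP : laurent; lQ : laurent; lS : laurent; lR : laurent }.

Definition ldmx (n : nat) (D : ldata) (a b : C) : 'M[C]_2 :=
  mx2 (leval (lP D) (a * b)) (a ^+ n * leval (lQ D) (a * b))
      (b ^+ n * leval (lS D) (a * b)) (leval (lR D) (a * b)).

Definition in_Lambda' (n : nat) (D : ldata) : Prop :=
  exists c : C, exists k : int, c != 0 /\
    forall a b : C, a * b != 0 -> \det (ldmx n D a b) = c * (a * b) ^ k.

Definition lgamma (D : ldata) : ldata :=
  LData (lconj (lR D)) (lconj (lS D)) (lconj (lQ D)) (lconj (lP D)).

(* Points of Y = W_2 x W_n : (a, b, (x, y)) *)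
Record pt := Pt { pa : C; pb : C; pv : 'cV[C]_2 }.

Definition px (p : pt) : C := pv p 0 0.
Definition py (p : pt) : C := pv p 1 0.

Definition act (n : nat) (t : C) (p : pt) : pt :=
  Pt (t ^+ 2 * pa p) (t ^- 2 * pb p) (vec2 (t ^+ n * px p) (t ^- n * py p)).

Definition sigma (t : C) : C := (cj t)^-1.

Definition inU (p : pt) : Prop := pa p * pb p != 0.

Definition mu0 (p : pt) : pt :=
  Pt (cj (pb p)) (cj (pa p)) (vec2 (cj (py p)) (cj (px p))).

Definition Mh (m : nat) (h : {poly C}) (a b : C) : 'M[C]_2 :=
  let n := m.*2.+1 in let T := a * b in let hv := h.[T] in
  mx2 (1 - T * hv ^+ 2) (a ^+ n * hv ^+ n)
      (- (b ^+ n * hv ^+ n)) (\sum_(j < n) (T * hv ^+ 2) ^+ j).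

Definition phih (m : nat) (h : {poly C}) (p : pt) : pt :=
  Pt (pa p) (pb p) (Mh m h (pa p) (pb p) *m pv p).

Definition muh (m : nat) (h : {poly C}) (p : pt) : pt := phih m h (mu0 p).

Definition Kdata (m : nat) (h : {poly C}) : ldata :=
  LData (1, 0%N)
        (h, m)
        (h * \sum_(j < m) ('X * h ^+ 2) ^+ j, m)
        (\sum_(j < m.+1) ('X * h ^+ 2) ^+ j, 0%N).

Definition Kmx (m : nat) (h : {poly C}) (a b : C) : 'M[C]_2 :=
  ldmx m.*2.+1 (Kdata m h) a b.

Definition psih (m : nat) (h : {poly C}) (p : pt) : pt :=
  Pt (pa p) (pb p) (Kmx m h (pa p) (pb p) *m pv p).

End Defs.

(* Main.v *)
Require Import Defs.
From HB Require Import structures.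
From mathcomp Require Import all_boot all_order all_algebra ring.
Import Order.TTheory GRing.Theory Num.Theory.
Local Open Scope ring_scope.
Section S.
Variable C : numClosedFieldType.
Lemma det_mx2 (p q r s : C) : \det (mx2 p q r s) = p * s - q * r.
Proof.
rewrite (expand_det_row _ 0) big_ord_recl big_ord1 /cofactor !det_mx11 !mxE /=.
rewrite expr0 expr1 mul1r. ring.
Qed.

Lemma mx2_mul (p q r s p' q' r' s' : C) :
  mx2 p q r s *m mx2 p' q' r' s' =
  mx2 (p * p' + q * r') (p * q' + q * s') (r * p' + s * r') (r * q' + s * s').
Proof.
apply/matrixP => i j; rewrite !mxE big_ord_recl big_ord1 !mxE /=.
by case: i => [[|[|//]] ?]; case: j => [[|[|//]] ?].
Qed.

Lemma mx2_congr (p q r s p' q' r' s' : C) : p = p' -> q = q' -> r = r' -> s = s' ->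
  mx2 p q r s = mx2 p' q' r' s'.
Proof. by move=> -> -> -> ->. Qed.

Lemma alg_key (T hv X W A B Sm : C) (X0 : X != 0) (A0 : A != 0)
  (hW : X * W = 1 + (T * hv ^+ 2 - 1) * Sm) (hB : A * B = X * X * T) :
  let u := T * hv ^+ 2 in let Sm1 := 1 + u * Sm in
  let Sn := Sm1 ^+ 2 - u * Sm ^+ 2 in
  [/\ \det (mx2 1 (A * (hv / X)) (B * (hv * Sm / X)) Sm1) = 1,
      \det (mx2 Sm1 (A * (hv * Sm / X)) (B * (hv / X)) 1) = 1 &
      mx2 (1 - u) (A * (hv * W)) (- (B * (hv * W))) Sn *m
      mx2 Sm1 (A * (hv * Sm / X)) (B * (hv / X)) 1 =
      mx2 1 (A * (hv / X)) (B * (hv * Sm / X)) Sm1].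
Proof.
move=> u Sm1 Sn.
have eB : B = X * X * T / A by rewrite -hB mulrC mulKf.
have eW : W = (1 + (T * hv ^+ 2 - 1) * Sm) / X by rewrite -hW mulrC mulKf.
rewrite eB eW /Sn /Sm1 /u {eB eW hW hB}.
rewrite mx2_mul !det_mx2; split; [field | field | ]; last (apply: mx2_congr; field).
all: by rewrite ?X0 ?A0.
Qed.

Lemma S_rec (u : C) k : \sum_(j < k.+1) u ^+ j = 1 + u * \sum_(j < k) u ^+ j.
Proof. by rewrite big_ord_recl expr0 mulr_sumr; congr (_ + _); apply: eq_bigr => i _; rewrite exprS. Qed.

Lemma S_last (u : C) k : \sum_(j < k.+1) u ^+ j = \sum_(j < k) u ^+ j + u ^+ k.
Proof. by rewrite big_ord_recr. Qed.

Lemma S_odd (u : C) m : \sum_(j < m.*2.+1) u ^+ j =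
  (\sum_(j < m.+1) u ^+ j) ^+ 2 - u * (\sum_(j < m) u ^+ j) ^+ 2.
Proof.
elim: m => [|m IH]; first by rewrite big_ord1 big_ord0 expr0; ring.
rewrite doubleS (S_last _ m.*2.+2) (S_last _ m.*2.+1) IH (S_last _ m.+1) (S_last _ m).
rewrite -addnn !exprS exprD.
ring.
Qed.

Lemma hsum (h : {poly C}) k (T : C) :
  (\sum_(j < k) ('X * h ^+ 2) ^+ j).[T] = \sum_(j < k) (T * h.[T] ^+ 2) ^+ j.
Proof. rewrite horner_sum; apply: eq_bigr => j _; by rewrite !hornerE. Qed.

Lemma Kmx_eq m (h : {poly C}) a b :
  let T := a * b in let hv := h.[T] in let X := T ^+ m in
  let Sm := \sum_(j < m) (T * hv ^+ 2) ^+ j in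
  Kmx m h a b = mx2 1 (a ^+ m.*2.+1 * (hv / X)) (b ^+ m.*2.+1 * (hv * Sm / X))
                     (1 + T * hv ^+ 2 * Sm).
Proof.
move=> T hv X Sm.
rewrite /Kmx /ldmx /leval /=.
by rewrite hornerM hsum hsum S_rec expr0 !divr1 ?horner1 ?hornerC.
Qed.

Lemma map_real (p : {poly C}) : p \is a polyOver Num.real -> map_poly (@cj C) p = p.
Proof.
move=> /polyOverP hp; apply/polyP => i; rewrite coef_map /cj.
exact: conj_Creal.
Qed.

Lemma map_sum (h : {poly C}) k : h \is a polyOver Num.real ->
  map_poly (@cj C) (\sum_(j < k) ('X * h ^+ 2) ^+ j) = \sum_(j < k) ('X * h ^+ 2) ^+ j.
Proof.
move=> hr; rewrite /cj rmorph_sum; apply: eq_bigr => j _.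
rewrite rmorphXn rmorphM rmorphXn; congr ((_ * _ ^+ 2) ^+ _); [exact: map_polyX | exact: map_real].
Qed.

Lemma gamma_eq m (h : {poly C}) a b : h \is a polyOver Num.real ->
  let T := a * b in let hv := h.[T] in let X := T ^+ m in
  let Sm := \sum_(j < m) (T * hv ^+ 2) ^+ j in
  ldmx m.*2.+1 (lgamma (Kdata m h)) a b =
    mx2 (1 + T * hv ^+ 2 * Sm) (a ^+ m.*2.+1 * (hv * Sm / X)) (b ^+ m.*2.+1 * (hv / X)) 1.
Proof.
move=> hr T hv X Sm.
rewrite /ldmx /lgamma /lconj /leval /=.
have e1 : map_poly (@cj C) (h * \sum_(j < m) ('X * h ^+ 2) ^+ j) =
          h * \sum_(j < m) ('X * h ^+ 2) ^+ j.
  by rewrite [LHS]rmorphM /= -[map_poly _ h]/(map_poly (@cj C) h) map_real // -[map_poly _ (\sum_(j < m) _)]/(map_poly (@cj C) _) map_sum.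
have e2 : map_poly (@cj C) 1 = 1 by rewrite /cj rmorph1.
rewrite e1 e2 map_sum // map_real //.
by rewrite hornerM hsum hsum S_rec expr0 !divr1 ?horner1 ?hornerC.
Qed.
Lemma Mh_eq m (h : {poly C}) a b :
  let T := a * b in let hv := h.[T] in
  let Sm := \sum_(j < m) (T * hv ^+ 2) ^+ j in
  let u := T * hv ^+ 2 in let Sm1 := 1 + u * Sm in
  Mh m h a b = mx2 (1 - u) (a ^+ m.*2.+1 * (hv * hv ^+ m.*2))
     (- (b ^+ m.*2.+1 * (hv * hv ^+ m.*2))) (Sm1 ^+ 2 - u * Sm ^+ 2).
Proof.
move=> T hv Sm u Sm1.
by rewrite /Mh /= S_odd S_rec -exprS.
Qed.

Lemma part12 m (h : {poly C}) a b : h \is a polyOver Num.real -> a * b != 0 ->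
  [/\ \det (Kmx m h a b) = 1,
      \det (ldmx m.*2.+1 (lgamma (Kdata m h)) a b) = 1 &
      Mh m h a b *m ldmx m.*2.+1 (lgamma (Kdata m h)) a b = Kmx m h a b].
Proof.
move=> hr ab0.
rewrite Mh_eq Kmx_eq gamma_eq //.
have a0 : a != 0 by apply: contraNneq ab0 => ->; rewrite mul0r.
have X0 : (a * b) ^+ m != 0 by rewrite expf_neq0.
have A0 : a ^+ m.*2.+1 != 0 by rewrite expf_neq0.
apply: alg_key => //.
  set u := a * b * h.[a * b] ^+ 2.
  have -> : (a * b) ^+ m * h.[a * b] ^+ m.*2 = u ^+ m.
    by rewrite /u !exprMn -addnn exprD.
  apply: (addrI (\sum_(j < m) u ^+ j)).
  rewrite -S_last S_rec; ring.
rewrite -exprMn -addnn exprS exprD; ring.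
Qed.
Lemma mx2_vec (p q r s x y : C) :
  mx2 p q r s *m vec2 x y = vec2 (p * x + q * y) (r * x + s * y).
Proof.
apply/matrixP => i j; rewrite !mxE big_ord_recl big_ord1 !mxE /=.
by case: i => [[|[|//]] ?].
Qed.

Lemma vec2_eta (v : 'cV[C]_2) : vec2 (v 0 0) (v 1 0) = v.
Proof.
apply/matrixP => i j; rewrite !mxE; rewrite (ord1 j).
by case: i => [[|[|//]] ?] /=; congr (v _ _); apply: val_inj.
Qed.

Lemma vec2_0 (x y : C) : vec2 x y 0 0 = x. Proof. by rewrite mxE. Qed.
Lemma vec2_1 (x y : C) : vec2 x y 1 0 = y. Proof. by rewrite mxE. Qed.

Lemma equiv_gen n (Pf Qf Sf Rf : C -> C) (s a b x y : C) : s != 0 ->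
  let G a b := mx2 (Pf (a * b)) (a ^+ n * Qf (a * b)) (b ^+ n * Sf (a * b)) (Rf (a * b)) in
  G (s ^+ 2 * a) (s ^- 2 * b) *m vec2 (s ^+ n * x) (s ^- n * y) =
  vec2 (s ^+ n * ((G a b *m vec2 x y) 0 0)) (s ^- n * ((G a b *m vec2 x y) 1 0)).
Proof.
move=> s0 G; rewrite /G.
have -> : s ^+ 2 * a * (s ^- 2 * b) = a * b.
  by rewrite mulrACA mulfV ?mul1r // expf_neq0.
rewrite !mx2_vec vec2_0 vec2_1 !exprMn exprVn -exprM mulnC exprM.
have z0 : s ^+ n != 0 by rewrite expf_neq0.
move: (s ^+ n) z0 => z z0.
congr vec2; field; exact: z0.
Qed.

Lemma cjM (x y : C) : cj (x * y) = cj x * cj y. Proof. exact: rmorphM. Qed.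
Lemma cjD (x y : C) : cj (x + y) = cj x + cj y. Proof. exact: rmorphD. Qed.
Lemma cjX (x : C) k : cj (x ^+ k) = cj x ^+ k. Proof. exact: rmorphXn. Qed.
Lemma cjK (x : C) : cj (cj x) = x. Proof. exact: conjCK. Qed.
Lemma cjV (x : C) : cj (x^-1) = (cj x)^-1. Proof. exact: fmorphV. Qed.
Lemma cj_eq0 (x : C) : (cj x == 0) = (x == 0). Proof. exact: conjC_eq0. Qed.

Lemma leval_conj (L : laurent C) t : leval (lconj L) (cj t) = cj (leval L t).
Proof.
rewrite /leval /lconj /= cjM cjV cjX; congr (_ * _).
by rewrite /cj horner_map.
Qed.

Lemma gamma_conj n (D : ldata C) a b :
  ldmx n (lgamma D) (cj b) (cj a) =
  mx2 (cj (leval (lR D) (a * b))) (cj (b ^+ n * leval (lS D) (a * b)))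
      (cj (a ^+ n * leval (lQ D) (a * b))) (cj (leval (lP D) (a * b))).
Proof.
rewrite /ldmx /lgamma /= -cjM [b * a]mulrC !leval_conj.
by rewrite !cjM !cjX.
Qed.

Lemma cj_sigma_n (t : C) k : cj (t ^- k) = sigma t ^+ k.
Proof. by rewrite /sigma exprVn cjV cjX. Qed.
Lemma cj_sigma_p (t : C) k : cj (t ^+ k) = sigma t ^- k.
Proof. by rewrite /sigma exprVn invrK cjX. Qed.

Lemma mu0_act n t (p : pt C) : mu0 (act n t p) = act n (sigma t) (mu0 p).
Proof.
case: p => a b v; rewrite /mu0 /act /px /py /= !vec2_0 !vec2_1.
by rewrite [cj (_ * b)]cjM [cj (_ * a)]cjM [cj (_ * v 1 0)]cjM [cj (_ * v 0 0)]cjM !cj_sigma_n !cj_sigma_p.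
Qed.

Lemma mu0K (p : pt C) : mu0 (mu0 p) = p.
Proof.
case: p => a b v; rewrite /mu0 /px /py /= !vec2_0 !vec2_1 !cjK.
by rewrite vec2_eta.
Qed.

Lemma Mh_eq2 m (h : {poly C}) a b :
  Mh m h a b = mx2 ((fun T => 1 - T * h.[T] ^+ 2) (a * b))
    (a ^+ m.*2.+1 * (fun T => h.[T] ^+ m.*2.+1) (a * b))
    (b ^+ m.*2.+1 * (fun T => - h.[T] ^+ m.*2.+1) (a * b))
    ((fun T => \sum_(j < m.*2.+1) (T * h.[T] ^+ 2) ^+ j) (a * b)).
Proof. by rewrite /Mh /= mulrN. Qed.

End S.

Theorem lemma3p3 (C : numClosedFieldType) (m : nat) (hm : (0 < m)%N)
    (h : {poly C}) (hreal : h \is a polyOver Num.real) :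
  let n := m.*2.+1 in
  (* K_h in Lambda' *)
  in_Lambda' n (Kdata m h) /\
  [/\
      (* det K_h = 1 *)
      (forall a b : C, a * b != 0 -> \det (Kmx m h a b) = 1),
      (* K_h . (^gamma K_h)^{-1} = M_h *)
      (forall a b : C, a * b != 0 ->
         Kmx m h a b *m invmx (ldmx n (lgamma (Kdata m h)) a b) = Mh m h a b),
      (* U is preserved by mu_h *)
      (forall p : pt C, inU p -> inU (muh m h p)),
      (* mu_h|_U = psi'_h o mu_0|_U o (psi'_h)^{-1}, psi'_h a C^*-equivariant
         automorphism of U *)
      (exists psinv : pt C -> pt C,
         [/\ (forall p : pt C, inU p ->
               [/\ inU (psih m h p), inU (psinv p),
                   psinv (psih m h p) = p & psih m h (psinv p) = p]),
             (forall (t : C) (p : pt C), t != 0 ->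
               psih m h (act n t p) = act n t (psih m h p))
           & forall p : pt C, inU p -> muh m h p = psih m h (mu0 (psinv p))])
    & (* mu_h|_U is a real circle form on U (involutive, sigma-equivariant) *)
      (forall p : pt C, inU p ->
         muh m h (muh m h p) = p /\
         forall t : C, t != 0 -> muh m h (act n t p) = act n (sigma t) (muh m h p))].
Proof.
move=> n.
have unitG : forall a b : C, a * b != 0 ->
    ldmx n (lgamma (Kdata m h)) a b \in unitmx.
  by move=> a b ab0; case: (@part12 C m h a b hreal ab0) => _ d _; rewrite unitmxE d unitr1.
have unitK : forall a b : C, a * b != 0 -> Kmx m h a b \in unitmx.
  by move=> a b ab0; case: (@part12 C m h a b hreal ab0) => d _ _; rewrite unitmxE d unitr1.
have P2 : forall a b : C, a * b != 0 ->
    Kmx m h a b *m invmx (ldmx n (lgamma (Kdata m h)) a b) = Mh m h a b.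
  move=> a b ab0; case: (@part12 C m h a b hreal ab0) => _ _ e.
  by rewrite -e mulmxK // unitG.
have U0 : forall p : pt C, inU p -> inU (mu0 p).
  by move=> [a b v]; rewrite /inU /mu0 /= -cjM mulrC cj_eq0.
have psiU : forall p : pt C, inU p -> inU (psih m h p) by [].
set psinv := fun p : pt C => Pt (pa p) (pb p) (invmx (Kmx m h (pa p) (pb p)) *m pv p).
have Hinv : forall p : pt C, inU p ->
    [/\ inU (psih m h p), inU (psinv p), psinv (psih m h p) = p & psih m h (psinv p) = p].
  move=> [a b v] /= pU; split => //.
    by rewrite /psinv /psih /= mulKmx // unitK.
  by rewrite /psinv /psih /= mulKVmx // unitK.
have Heq : forall p : pt C, inU p -> muh m h p = psih m h (mu0 (psinv p)).
  move=> [a b v] pU; rewrite /inU /= in pU.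
  have ab' : cj b * cj a != 0 by rewrite -cjM mulrC cj_eq0.
  rewrite /muh /phih /mu0 /psih /psinv /px /py /=.
  congr Pt.
  rewrite -P2 // -mulmxA; congr (_ *m _).
  set w := invmx (Kmx m h a b) *m v.
  have Kw : Kmx m h a b *m w = v by rewrite /w mulKVmx // unitK.
  apply: (canLR (mulKmx (unitG _ _ ab'))).
  rewrite gamma_conj -Kw -{1 2}[w]vec2_eta /Kmx /ldmx !mx2_vec !vec2_0 !vec2_1.
  by congr vec2; rewrite cjD ![cj (_ * w _ _)]cjM addrC.
have Peq : forall (t : C) (p : pt C), t != 0 -> psih m h (act n t p) = act n t (psih m h p).
  move=> t [a b v] t0; rewrite /psih /act /px /py /=.
  congr Pt.
  rewrite -[in RHS](@vec2_eta C v).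
  exact: (@equiv_gen C n (@leval C (lP (Kdata m h))) (leval (lQ (Kdata m h)))
           (leval (lS (Kdata m h))) (leval (lR (Kdata m h))) t a b (v 0 0) (v 1 0) t0).
have Meq : forall (t : C) (p : pt C), t != 0 -> phih m h (act n t p) = act n t (phih m h p).
  move=> t [a b v] t0; rewrite /phih /act /px /py /=.
  congr Pt.
  rewrite -[in RHS](@vec2_eta C v) !Mh_eq2.
  exact: (@equiv_gen C n (fun T => 1 - T * h.[T] ^+ 2) (fun T => h.[T] ^+ n)
           (fun T => - h.[T] ^+ n) (fun T => \sum_(j < n) (T * h.[T] ^+ 2) ^+ j)
           t a b (v 0 0) (v 1 0) t0).
split.
  exists 1, 0; split; first exact: oner_neq0.
  by move=> a b ab0; case: (@part12 C m h a b hreal ab0) => d _ _; rewrite expr0z mulr1.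
split.
- by move=> a b ab0; case: (@part12 C m h a b hreal ab0).
- exact: P2.
- by move=> p /U0 H; exact: H.
- by exists psinv; split.
move=> p pU; split.
  have qU : inU (mu0 (psinv p)) by apply: U0; case: (Hinv p pU).
  rewrite (Heq _ pU) Heq; last exact: psiU.
  case: (Hinv _ qU) => _ _ -> _; rewrite mu0K.
  by case: (Hinv p pU).
move=> t t0; rewrite /muh mu0_act Meq //.
by rewrite /sigma invr_eq0 cj_eq0.
Qed.
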